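(* Run the main loop of $c$-Adaptive ShiversSort on a sequence of positive run lengths $q_1,\dots,q_\rho$ with $\sum_i q_i=n$. Let $m$ be the total length of all merged runs created during the main loop. Then $\sum (r_1+r_2)\le 2(n+m)$, where the sum is over all failed checks and $r_1,r_2$ are the lengths of the top two stack entries at the time of that check. In particular, $\sum 2\max\{r_1,r_2\}\le 4(n+m)$ over the same failed checks.
   Context: Fix $c>0$. The main loop of $c$-Adaptive ShiversSort maintains a stack $S$ of run lengths. The top entry is called $R_1$ with length $r_1$, the next $R_2$ with length $r_2$, and so on. For $t=1,\dots,\rho$ it does the following. It pushes a new run of length $q_t$. Then, while $|S|\ge3$ and $\ell_3\le\max\{\ell_1,\ell_2\}$, where $\ell_i=\lfloor\log_2(r_i/c)\rfloor$, it replaces $R_3$ and $R_2$ by a single new run of length $r_3+r_2$, occupying the second position. Each such newly created run is a merged run. A failed check is an evaluation of the while-condition with $|S|\ge3$ that evaluates to false. *)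

(* Defs.v *)
From Stdlib Require Import Reals ZArith Arith List Lia.
Import ListNotations.
Open Scope R_scope.

(* ℓ(r) = floor(log2(r / c)); Int_part x = up x - 1 is the floor of x. *)
Definition level (c : R) (r : nat) : Z := Int_part (ln (INR r / c) / ln 2).

(* The stack is a list with its top (R_1) first.
   Returns (final stack, lengths of merged runs created (in order),
            list of failed checks as pairs (r_1, r_2)).
   The fuel is always taken >= size of the stack, which suffices since every
   merge shrinks the stack by one, so fuel never runs out before the loop
   terminates. *)
Fixpoint merge_loop (c : R) (fuel : nat) (St : list nat)
  : list nat * list nat * list (nat * nat) :=
  match fuel with
  | O => (St, [], [])
  | S fuel' =>
    match St with
    | r1 :: r2 :: r3 :: T =>
      if (level c r3 <=? Z.max (level c r1) (level c r2))%Z then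
        let '(St', ms, fs) := merge_loop c fuel' (r1 :: (r3 + r2)%nat :: T) in
        (St', (r3 + r2)%nat :: ms, fs)
      else (St, [], [(r1, r2)])
    | _ => (St, [], [])
    end
  end.

Fixpoint main_loop (c : R) (St : list nat) (qs : list nat)
  : list nat * list nat * list (nat * nat) :=
  match qs with
  | [] => (St, [], [])
  | q :: qs' =>
    let '(St1, ms1, fs1) := merge_loop c (S (length St)) (q :: St) in
    let '(St2, ms2, fs2) := main_loop c St1 qs' in
    (St2, ms1 ++ ms2, fs1 ++ fs2)
  end.

Definition merged_runs (c : R) (qs : list nat) : list nat :=
  snd (fst (main_loop c [] qs)).

Definition failed_checks (c : R) (qs : list nat) : list (nat * nat) :=
  snd (main_loop c [] qs).

(* Main.v *)
Require Import Defs.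
From Stdlib Require Import Reals ZArith Arith List Lia.
Import ListNotations.

Definition sf (fs : list (nat * nat)) := list_sum (map fst fs).
Definition ss (fs : list (nat * nat)) := list_sum (map snd fs).

Lemma sum_app (l1 l2 : list nat) : list_sum (l1 ++ l2) = (list_sum l1 + list_sum l2)%nat.
Proof. induction l1; simpl; lia. Qed.

Lemma merge_loop_bound c fuel St :
  let '(St', ms, fs) := merge_loop c fuel St in
  hd 0%nat St' = hd 0%nat St /\ (sf fs <= hd 0%nat St)%nat /\
  (ss fs <= hd 0%nat (tl St) + list_sum ms)%nat.
Proof.
  revert St; induction fuel as [|f IH]; intros St; simpl.
  - unfold sf, ss; simpl; lia.
  - destruct St as [|r1 [|r2 [|r3 T]]]; unfold sf, ss; simpl; try lia.
    destruct (level c r3 <=? Z.max (level c r1) (level c r2))%Z.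
    + specialize (IH (r1 :: (r3 + r2)%nat :: T)).
      destruct (merge_loop c f (r1 :: (r3 + r2)%nat :: T)) as [[St' ms] fs].
      unfold sf, ss in *; simpl in *; lia.
    + simpl; lia.
Qed.

Lemma main_loop_bound c qs St :
  let '(St', ms, fs) := main_loop c St qs in
  (sf fs <= list_sum qs)%nat /\
  (ss fs <= hd 0%nat St + list_sum qs + list_sum ms)%nat.
Proof.
  revert St; induction qs as [|q qs IH]; intros St.
  - unfold sf, ss; simpl; lia.
  - cbn [main_loop]. pose proof (merge_loop_bound c (S (length St)) (q :: St)) as H1.
    destruct (merge_loop c (S (length St)) (q :: St)) as [[St1 ms1] fs1].
    specialize (IH St1).
    destruct (main_loop c St1 qs) as [[St2 ms2] fs2].
    unfold sf, ss in *; simpl in *.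
    rewrite !map_app, !sum_app. simpl in *. lia.
Qed.

Lemma sum_pair fs :
  list_sum (map (fun p : nat * nat => (fst p + snd p)%nat) fs) = (sf fs + ss fs)%nat.
Proof. unfold sf, ss; induction fs as [|[a b] fs IH]; simpl list_sum in *; simpl map in *; simpl fst in *; simpl snd in *; lia. Qed.

Lemma sum_max fs :
  (list_sum (map (fun p : nat * nat => (2 * Nat.max (fst p) (snd p))%nat) fs) <= 2 * (sf fs + ss fs))%nat.
Proof. unfold sf, ss; induction fs as [|[a b] fs IH]; simpl list_sum in *; simpl map in *; simpl fst in *; simpl snd in *; lia. Qed.

Theorem mainTheorem9 (c : R) (qs : list nat) (n : nat) :
  (0 < c)%R ->
  Forall (fun q => (0 < q)%nat) qs ->
  list_sum qs = n ->
  let m := list_sum (merged_runs c qs) in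
  (list_sum (map (fun p => fst p + snd p) (failed_checks c qs)) <= 2 * (n + m))%nat /\
  (list_sum (map (fun p => 2 * Nat.max (fst p) (snd p)) (failed_checks c qs))
     <= 4 * (n + m))%nat.
Proof.
  intros _ _ Hn m. unfold m, merged_runs, failed_checks.
  pose proof (main_loop_bound c qs []) as H.
  pose proof (sum_max (snd (main_loop c [] qs))) as Hm.
  rewrite sum_pair.
  destruct (main_loop c [] qs) as [[St ms] fs]; simpl in *. lia.
Qed.
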